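(* Let $[X,d,m]$ be a metric random walk space with invariant probability measure $\nu$. Then $[X,d,m]$ with $\nu$ is $m$-connected if and only if $\nu$ is ergodic.
   Context: A metric random walk space $[X,d,m]$ is a Polish metric space $(X,d)$ with a family $m=(m_x)_{x\in X}$ of Borel probability measures, $x\mapsto m_x(A)$ Borel measurable, each with finite first moment. A Radon measure $\nu$ is invariant if $\nu(A)=\int_X m_x(A)d\nu(x)$ for all $\nu$-measurable $A$. Iterates $m_x^{*1}=m_x$, $m_x^{*n}(A)=\int_X m_z(A)dm_x^{*(n-1)}(z)$; $N^m_D=\{x:m_x^{*n}(D)=0\ \forall n\in\mathbb N\}$. The space is $m$-connected if $\nu(N^m_D)=0$ for every $\nu$-measurable $D$ with $0<\nu(D)<\infty$. A Borel set $B$ is invariant for $m$ if $m_x(B)=1$ for every $x\in B$; the invariant probability measure $\nu$ is ergodic if $\nu(B)\in\{0,1\}$ for every invariant set $B$. *)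

(* Defs.v *)
From HB Require Import structures.
From mathcomp Require Import all_boot all_order all_algebra.
From mathcomp Require Import all_classical all_reals all_analysis measurable_realfun.
Set Implicit Arguments. Unset Strict Implicit. Unset Printing Implicit Defensive.
Import Order.TTheory GRing.Theory Num.Theory.
Local Open Scope classical_set_scope.
Local Open Scope ring_scope.

Section Defs.
Context {R : realType} {dX : measure_display} {X : measurableType dX}.

Definition is_metric (dist : X -> X -> R) : Prop :=
  [/\ forall x y, 0 <= dist x y,
      forall x y, dist x y = 0 <-> x = y,
      forall x y, dist x y = dist y x &
      forall x y z, dist x z <= dist x y + dist y z].

Definition dist_open (dist : X -> X -> R) (U : set X) : Prop :=
  forall x, U x -> exists2 e : R, 0 < e & [set y | dist x y < e] `<=` U.

Definition dist_cauchy (dist : X -> X -> R) (u : nat -> X) : Prop :=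
  forall e : R, 0 < e -> exists N : nat,
    forall p q : nat, (N <= p)%N -> (N <= q)%N -> dist (u p) (u q) < e.

Definition dist_complete (dist : X -> X -> R) : Prop :=
  forall u : nat -> X, dist_cauchy dist u ->
    exists l : X, forall e : R, 0 < e -> exists N : nat,
      forall p : nat, (N <= p)%N -> dist (u p) l < e.

Definition dist_separable (dist : X -> X -> R) : Prop :=
  exists S : set X, countable S /\
    forall x (e : R), 0 < e -> exists2 s, S s & dist x s < e.

Definition polish_borel (dist : X -> X -> R) : Prop :=
  [/\ is_metric dist, dist_complete dist, dist_separable dist &
      (@measurable dX X) = <<s [set U | dist_open dist U] >>].

Definition metric_random_walk_space (dist : X -> X -> R)
    (m : X -> probability X R) : Prop :=
  [/\ polish_borel dist,
      (forall A, measurable A -> measurable_fun [set: X] ((fun x => m x A) : X -> \bar R)) &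
      (forall x, (\int[m x]_y (dist x y)%:E < +oo)%E)].

Definition invariant_measure (m : X -> probability X R)
    (nu : set X -> \bar R) : Prop :=
  forall A, measurable A -> nu A = (\int[nu]_x m x A)%E.

(* Iterates: mstar k x = m_x^{*(k+1)}, i.e. mstar 0 x = m_x and
   m_x^{*(n)}(A) = \int m_z(A) dm_x^{*(n-1)}(z). *)
Fixpoint mstar (m : X -> probability X R) (k : nat) : X -> set X -> \bar R :=
  match k with
  | 0%N => fun x A => m x A
  | k'.+1 => fun x A => (\int[mstar m k' x]_z m z A)%E
  end.

Definition NmD (m : X -> probability X R) (D : set X) : set X :=
  [set x | forall k : nat, mstar m k x D = 0%E].

Definition m_connected (m : X -> probability X R) (nu : set X -> \bar R) : Prop :=
  forall D, measurable D -> (0 < nu D)%E -> (nu D < +oo)%E -> nu (NmD m D) = 0%E.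

Definition invariant_set (m : X -> probability X R) (B : set X) : Prop :=
  measurable B /\ forall x, B x -> m x B = 1%E.

Definition ergodic (m : X -> probability X R) (nu : set X -> \bar R) : Prop :=
  forall B, invariant_set m B -> nu B = 0%E \/ nu B = 1%E.

End Defs.

(* Main.v *)
Require Import Defs.
From HB Require Import structures.
From mathcomp Require Import all_boot all_order all_algebra.
From mathcomp Require Import all_classical all_reals all_analysis measurable_realfun.
Set Implicit Arguments. Unset Strict Implicit. Unset Printing Implicit Defensive.
Import Order.TTheory GRing.Theory Num.Theory.
Local Open Scope classical_set_scope.
Local Open Scope ring_scope.
Local Open Scope ereal_scope.

Import KCOMP_FINITE_KERNEL.
Section K.
Context {R : realType} {dX : measure_display} {X : measurableType dX}
  (m : X -> probability X R)
  (hm : forall A, measurable A -> measurable_fun [set: X] ((fun x => m x A) : X -> \bar R)).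

Definition mm (x : X) : {measure set X -> \bar R} := m x.
HB.instance Definition _ := isKernel.Build _ _ X X R mm hm.
Lemma mm_uub : measure_fam_uub mm.
Proof. exists 2%R => x; rewrite (_ : mm x setT = 1) ?lte_fin ?ltr1n //; exact: probability_setT. Qed.
HB.instance Definition _ := Kernel_isFinite.Build _ _ X X R mm mm_uub.

Definition KK (p : X * X) : {measure set X -> \bar R} := m p.2.
Lemma KK_meas U : measurable U -> measurable_fun [set: X * X] (KK ^~ U).
Proof. move=> mU; exact: (measurableT_comp (hm mU) measurable_snd). Qed.
HB.instance Definition _ := isKernel.Build _ _ (X * X)%type X R KK KK_meas.
Lemma KK_uub : measure_fam_uub KK.
Proof. exists 2%R => x; rewrite (_ : KK x setT = 1) ?lte_fin ?ltr1n //; exact: probability_setT. Qed.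
HB.instance Definition _ := Kernel_isFinite.Build _ _ _ X R KK KK_uub.

Fixpoint Mk (n : nat) : R.-fker X ~> X :=
  match n with 0%N => mm | n'.+1 => (FiniteKernel.clone _ _ X X R (Mk n' \; KK) _) end.

Lemma MkS n x A : Mk n.+1 x A = \int[Mk n x]_y m y A.
Proof. by []. Qed.

Lemma mstarE n x : mstar m n x = Mk n x.
Proof.
elim: n x => [//|n IH] x /=; apply/funext => A.
by rewrite MkS IH.
Qed.


Lemma integral_MkS n x (f : X -> \bar R) : (forall z, 0 <= f z) ->
  measurable_fun setT f ->
  \int[Mk n.+1 x]_z f z = \int[Mk n x]_y \int[m y]_z f z.
Proof. move=> f0 mf; exact: (integral_kcomp (Mk n) KK x f0 mf). Qed.

Lemma meas_int_m (f : X -> \bar R) : (forall z, 0 <= f z) ->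
  measurable_fun setT f -> measurable_fun setT (fun y => \int[m y]_z f z).
Proof. move=> f0 mf; exact: (@measurable_fun_integral_kernel _ _ _ _ _ mm hm f f0 mf). Qed.

Lemma assocMk b : forall a x (f : X -> \bar R), (forall z, 0 <= f z) ->
  measurable_fun setT f ->
  \int[Mk (a + b.+1) x]_z f z = \int[Mk a x]_y \int[Mk b y]_z f z.
Proof.
elim: b => [|b IH] a x f f0 mf.
  by rewrite addn1 integral_MkS.
rewrite addnS integral_MkS // IH //; last 2 first.
- by move=> z; apply: integral_ge0 => w _; exact: f0.
- exact: meas_int_m.
by apply: eq_integral => y _; rewrite integral_MkS.
Qed.

Lemma MkS' b x A : measurable A -> Mk b.+1 x A = \int[m x]_y Mk b y A.
Proof.
move=> mA.
transitivity (\int[Mk b.+1 x]_z (\1_A z)%:E).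
  by rewrite integral_indic // setIT.
have := @assocMk b 0%N x (fun z => (\1_A z)%:E).
rewrite add0n => ->; last 2 first.
- by move=> z; rewrite lee_fin.
- by apply/measurable_EFinP; exact: measurable_indic.
by apply: eq_integral => y _; rewrite integral_indic // setIT.
Qed.

End K.

Lemma NmD_meas {R : realType} {dX : measure_display} {X : measurableType dX}
  (m : X -> probability X R)
  (hm : forall A, measurable A -> measurable_fun [set: X] ((fun x => m x A) : X -> \bar R))
  D : measurable D -> measurable (NmD m D).
Proof.
move=> mD.
rewrite (_ : NmD m D = \bigcap_k ((Mk hm k ^~ D) @^-1` [set 0])); last first.
  apply/seteqP; split => x /=.
    by move=> H k _ /=; rewrite -(mstarE hm); exact: H.
  by move=> H k; rewrite (mstarE hm); exact: H.
apply: bigcapT_measurable => k.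
have := measurable_kernel (Mk hm k) D mD measurableT [set 0] (emeasurable_set1 _).
by rewrite setTI.
Qed.

Unset Implicit Arguments.
Local Close Scope ereal_scope.
Local Open Scope ring_scope.

Theorem theorem2p19 (R : realType) (dX : measure_display) (X : measurableType dX)
    (dist : X -> X -> R) (m : X -> probability X R) (nu : probability X R) :
  metric_random_walk_space dist m ->
  invariant_measure m nu ->
  (m_connected m nu <-> ergodic m nu).
Proof.
Local Open Scope ereal_scope.
move=> [_ hm _] hinv.
have mcomp B y : measurable B -> m y B = 1 -> m y (~` B) = 0.
  by move=> mB h; rewrite probability_setC // h subee.
split.
- move=> conn B [mB Binv].
  have [->|nB0] := eqVneq (nu B) 0; first by left.
  have [->|nB1] := eqVneq (nu B) 1; first by right.
  exfalso.
  have mD : measurable (~` B) by exact: measurableC.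
  have hBN : B `<=` NmD m (~` B).
    move=> x Bx k; rewrite (mstarE hm).
    elim: k x Bx => [|k IH] x Bx.
      by apply: mcomp => //; exact: Binv.
    rewrite MkS; apply/eqP; rewrite eq_le; apply/andP; split; last first.
      by apply: integral_ge0 => y _.
    apply: (@le_trans _ _ (\int[Mk hm k x]_y (\1_(~` B) y)%:E)); last first.
      by rewrite integral_indic // setIT IH.
    apply: ge0_le_integral => //.
    + exact (hm _ mD).
    + by apply/measurable_EFinP; exact: measurable_indic.
    move=> y _; have [By|nBy] := pselect (B y).
      by rewrite (mcomp B y mB (Binv y By)) indicE memNset // lee_fin.
    by rewrite indicE mem_set //=; apply: probability_le1.
  have nB1' : nu B < 1.
    by rewrite lt_neqAle nB1 probability_le1.
  have := conn _ mD.
  rewrite probability_setC // sube_gt0 // nB1' => /(_ isT).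
  have -> : 1 - nu B < +oo by rewrite -probability_setC // (le_lt_trans (probability_le1 _ mD)) ?ltry.
  move=> /(_ isT) hN.
  have : nu B <= nu (NmD m (~` B)).
    by apply: le_measure => //; rewrite inE //; exact: NmD_meas.
  rewrite hN => hle.
  by move: nB0; rewrite eq_le hle measure_ge0.
- move=> erg D mD Dpos _.
  set N := NmD m D.
  have mN : measurable N by exact: NmD_meas.
  have invN : invariant_set m N.
    split => // x Nx.
    have hC : m x (~` N) = 0.
      have : (mm m x).-negligible
          (\bigcup_k ~` [set y | setT y -> Mk hm k y D = 0]).
        apply: negligible_bigcup => k.
        have := @ae_eq_integral_abs _ _ _ (mm m x) setT measurableT
          (fun y => Mk hm k y D) (measurable_kernel (Mk hm k) D mD).
        move=> [+ _]; apply.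
        rewrite (eq_integral (fun y => Mk hm k y D)); last first.
          by move=> y _; rewrite gee0_abs.
        have := Nx k.+1; rewrite (mstarE hm) MkS' //.
      move=> [A [mA A0 sub]].
      apply/eqP; rewrite eq_le measure_ge0 andbT -A0.
      apply: le_measure; rewrite ?inE //; first exact: measurableC.
      move=> y nNy; apply: sub.
      have [k hk] : exists k, mstar m k y D != 0.
        apply/not_existsP => H; apply: nNy => k.
        by have := H k; move/negP; rewrite negbK => /eqP.
      by exists k => //= /(_ I) h; move: hk; rewrite (mstarE hm) h eqxx.
    have := probability_setC (m x) (measurableC mN).
    by rewrite setCK hC sube0.
  have [|] := erg N invN; first by [].
  move=> nuN1; exfalso.
  have : nu D <= nu (~` N).
    rewrite hinv //.
    apply: (@le_trans _ _ (\int[nu]_y (\1_(~` N) y)%:E)); last first.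
      by rewrite integral_indic ?setIT //; exact: measurableC.
    apply: ge0_le_integral => //.
    + exact (hm _ mD).
    + by apply/measurable_EFinP; apply: measurable_indic; exact: measurableC.
    move=> y _; have [Ny|nNy] := pselect (N y).
      by have := Ny 0%N; rewrite /= => ->; rewrite lee_fin.
    by rewrite indicE mem_set //=; apply: probability_le1.
  rewrite probability_setC // nuN1 subee // => hle.
  by move: Dpos; rewrite lt_neqAle eq_sym eq_le hle measure_ge0.
Qed.
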